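(* Let $X \sim \mathcal{N}(\mu,\sigma^2)$ be a single observation, with $\mu\in\mathbb{R}$ and $\sigma>0$ unknown, and for $c>1$ let $I_2(c) = (-c|X|,\; c|X|)$. Then the coverage probability $P_{\mu,\sigma}(\mu \in I_2(c))$ depends on $(\mu,\sigma)$ only through $\lambda=\mu/\sigma$ and is an even function of $\lambda$. Writing $\lambda=|\mu|/\sigma\ge 0$, it equals $$P_2(\lambda,c) = \Phi\Big(\frac{c-1}{c}\lambda\Big) + 1 - \Phi\Big(\frac{c+1}{c}\lambda\Big).$$ Over $\lambda\ge0$, $P_2(\lambda,c)$ is minimized at $$\lambda^*(c) = \Big[\frac{c}{2}\log\frac{c+1}{c-1}\Big]^{1/2}.$$ Consequently, for every $\alpha$ with $0<\alpha<1/2$ there exists a constant $c=c(\alpha)>1$ such that $\inf_{\mu\in\mathbb{R},\sigma>0} P_{\mu,\sigma}(\mu\in I_2(c(\alpha))) \ge 1-\alpha$.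
   Context: $\Phi$ denotes the standard normal cumulative distribution function. $I_2(c)$ is the (Stein) interval symmetric about $0$ with half-length $c|X|$. *)

(* Defs.v *)
From HB Require Import structures.
From mathcomp Require Import all_boot all_order all_algebra.
From mathcomp Require Import all_classical all_reals all_analysis.
From mathcomp Require Import normal_distribution.
Set Implicit Arguments. Unset Strict Implicit. Unset Printing Implicit Defensive.
Import Order.TTheory GRing.Theory Num.Theory.
Local Open Scope classical_set_scope.
Local Open Scope ring_scope.

Definition Phi {R : realType} (x : R) : R :=
  fine (normal_prob 0 1 `]-oo, x]).

Definition I2 {R : realType} (c x : R) : set R := `](- (c * `|x|)), c * `|x|[.

Definition coverage {R : realType} (c mu sigma : R) : R :=
  fine (normal_prob mu sigma [set x : R | mu \in I2 c x]).

Definition P2 {R : realType} (lam c : R) : R :=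
  Phi ((c - 1) / c * lam) + 1 - Phi ((c + 1) / c * lam).

Definition lamstar {R : realType} (c : R) : R :=
  Num.sqrt (c / 2 * ln ((c + 1) / (c - 1))).

(* Main.v *)
Require Import Defs.
From HB Require Import structures.
From mathcomp Require Import all_boot all_order all_algebra.
From mathcomp Require Import all_classical all_reals all_analysis.
From mathcomp Require Import normal_distribution measurable_realfun.
From mathcomp Require Import ring lra.
Import Order.TTheory GRing.Theory Num.Theory.
Import numFieldTopology.Exports.
Local Open Scope classical_set_scope.
Local Open Scope ring_scope.

Section S.
Variable R : realType.
Notation mu := (@lebesgue_measure R).

Lemma fine1B (x : \bar R) : x \is a fin_num -> fine (1 - x)%E = 1 - fine x.
Proof. by move=> /fineK <-. Qed.

Lemma fin1B (x : \bar R) : x \is a fin_num -> (1 - x)%E \is a fin_num.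
Proof. by move=> /fineK <-. Qed.

Lemma np_pt0 (m s x : R) : normal_prob m s [set x] = 0%E.
Proof. by rewrite /normal_prob integral_set1. Qed.

Lemma np_fin (m s : R) (A : set R) : measurable A ->
  normal_prob m s A \is a fin_num.
Proof.
move=> mA; rewrite ge0_fin_numE ?measure_ge0//.
exact: (le_lt_trans (probability_le1 (normal_prob m s) mA)) (ltry _).
Qed.

Lemma np_open (m s x : R) :
  normal_prob m s `]-oo, x[ = normal_prob m s `]-oo, x].
Proof.
have -> : [set` `]-oo, x]] = `]-oo, x[ `|` [set x] :> set R.
  apply/seteqP; split => y /=; rewrite !in_itv/= ?andbT.
    by rewrite le_eqVlt => /orP[/eqP->|->]; [right|left].
  by case=> [/ltW|->].
rewrite measureU0 //; exact: (np_pt0 m s x).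
Qed.

Lemma np_tail (m s x : R) :
  normal_prob m s `]x, +oo[ = (1 - normal_prob m s `]-oo, x])%E.
Proof.
rewrite -probability_setC//; congr (normal_prob m s _).
by apply/seteqP; split => y /=; rewrite !in_itv/= ?andbT ?ltNge => /negP.
Qed.

Lemma np_tailc (m s x : R) :
  normal_prob m s `[x, +oo[ = (1 - normal_prob m s `]-oo, x])%E.
Proof.
rewrite -np_open -probability_setC//; congr (normal_prob m s _).
by apply/seteqP; split => y /=; rewrite !in_itv/= ?andbT ?leNgt => /negP.
Qed.

Lemma np_split (m s x y : R) : x <= y ->
  normal_prob m s `]-oo, y] = (normal_prob m s `]-oo, x] + normal_prob m s `]x, y])%E :> \bar R.
Proof.
move=> xy; rewrite -measureU//.
  congr (normal_prob m s _); apply/seteqP; split => z /=; rewrite !in_itv/= ?andbT.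
    by case: (leP z x) => zx; [left|right].
  by case=> [/le_trans->//|/andP[]].
apply/seteqP; split => z //=; rewrite !in_itv/= ?andbT => -[zx /andP[]].
by rewrite ltNge zx.
Qed.


Lemma np_scale (m s y : R) : 0 < s ->
  normal_prob m s `]-oo, y] = normal_prob 0 1 `]-oo, (y - m) / s].
Proof.
move=> s0.
pose F u := (u + m / s) * s.
have Fb : F ((y - m) / s) = y.
  rewrite /F; field; exact: lt0r_neq0.
have F'E : F^`()%classic = cst s.
  apply/funext => u; rewrite /F derive1E deriveM// deriveD// derive_cst.
  by rewrite derive_id derive_cst addr0 scaler0 add0r scaler1.
rewrite /normal_prob -[in LHS]Fb.
rewrite increasing_ge0_integration_by_substitutionNy //.
- apply: eq_integral => u _; congr EFin.
  rewrite F'E /= !normal_pdfE ?oner_eq0 ?lt0r_neq0//.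
  rewrite /= /F /normal_peak /normal_fun !fctE /=.
  have -> : - ((u + m / s) * s - m) ^+ 2 / (s ^+ 2 *+ 2) = - (u - 0) ^+ 2 / (1 ^+ 2 *+ 2).
    by field; exact: lt0r_neq0.
  have -> : s ^+ 2 * pi *+ 2 = s ^+ 2 * (1 ^+ 2 * pi *+ 2) by ring.
  have k0 : 0 < Num.sqrt (1 ^+ 2 * pi *+ 2 : R).
    by rewrite sqrtr_gt0 expr1n mul1r pmulrn_lgt0// pi_gt0.
  rewrite sqrtrM ?sqr_ge0// sqrtr_sqr ger0_norm ?ltW//.
  by field; rewrite lt0r_neq0// lt0r_neq0.
- by move=> u v _ _ uv; rewrite /F ltr_pM2r// ltrD2r.
- by rewrite F'E => ? _; exact: cst_continuous.
- by rewrite F'E; exact: is_cvg_cst.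
- by rewrite F'E; exact: cvg_cst.
- split.
    move=> x _; rewrite /F; apply: derivableM => //; exact: derivableD.
  apply: cvg_at_left_filter; rewrite /F.
  apply: cvgM; last exact: cvg_cst.
  by apply: (@cvgD _ R^o); [exact: cvg_id|exact: cvg_cst].
- by apply/gt0_cvgMlNy => //; exact: cvg_addrr_Ny.
- apply: continuous_subspaceT; exact: continuous_normal_pdf (lt0r_neq0 s0).
- by move=> ? _; exact: normal_pdf_ge0.
Qed.

Lemma np_sym (x : R) :
  normal_prob 0 1 `]-oo, - x] = (1 - normal_prob 0 1 `]-oo, x])%E.
Proof.
rewrite -np_tailc /normal_prob ge0_integration_by_substitutionNy.
- apply: eq_integral => u _; congr EFin.
  by rewrite /= !normal_pdfE ?oner_eq0// /normal_fun !subr0 sqrrN.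
- apply: continuous_subspaceT; exact: continuous_normal_pdf (oner_neq0 R).
- by move=> ? _; exact: normal_pdf_ge0.
Qed.

Definition Fc (m s x : R) := fine (normal_prob m s `]-oo, x]).

Lemma PhiN (x : R) : Phi (- x) = 1 - Phi x.
Proof.
rewrite /Phi np_sym fineB// np_fin//.
Qed.

Lemma Phi_scale (k x : R) : 0 < k -> Phi (k * x) = Fc 0 k^-1 x.
Proof.
move=> k0; by rewrite /Fc (@np_scale 0 k^-1 x) ?invr_gt0// subr0 invrK [x * k]mulrC.
Qed.


Lemma np_fini (m s : R) (i : interval R) : normal_prob m s [set` i] \is a fin_num.
Proof. exact: np_fin. Qed.

Lemma cov_set (c mu : R) : 0 < c ->
  [set x : R | mu \in I2 c x] = `]-oo, - (`|mu| / c)[ `|` `]`|mu| / c, +oo[.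
Proof.
move=> c0.
have key x : mu \in I2 c x <-> `|mu| / c < `|x|.
  by rewrite /I2 in_setE /= in_itv /= -ltr_norml ltr_pdivrMr// mulrC.
apply/seteqP; split => x /=.
  move/key; rewrite ltr_normr in_itv/= ?andbT => /orP[H|H]; first by right; rewrite in_itv/= H.
  by left; rewrite ltrNr.
move=> H; apply/key; rewrite ltr_normr; apply/orP.
case: H => H; [right; by rewrite ltrNr|left].
by move: H; rewrite in_itv/= ?andbT.
Qed.


End S.

Arguments Fc {R}.
Section S2.
Variable R : realType.

Lemma coverage_Phi (c mu sigma : R) : 1 < c -> 0 < sigma ->
  coverage c mu sigma = Phi ((- (`|mu| / c) - mu) / sigma) + 1
                        - Phi ((`|mu| / c - mu) / sigma).
Proof.
move=> c1 s0; have c0 : 0 < c by apply: lt_trans c1.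
have t0 : 0 <= `|mu| / c by rewrite divr_ge0// ltW.
rewrite /coverage cov_set// measureU//; last first.
  rewrite -subset0 => x [] /=; rewrite !in_itv/= ?andbT => h1 h2; lra.
set t := `|mu| / c in t0 *.
rewrite -[X in fine X]/(normal_prob mu sigma `]-oo, (- t)%R[ + normal_prob mu sigma `]t, +oo[)%E.
rewrite np_open np_tail fineD; last 2 first.
- exact: np_fini.
- exact/fin1B/np_fini.
rewrite fine1B; last exact: np_fini.
by rewrite (@np_scale _ mu sigma (- t))// (@np_scale _ mu sigma t)// /Phi addrA.
Qed.


Lemma coverage_P2 (c mu sigma : R) : 1 < c -> 0 < sigma ->
  coverage c mu sigma = P2 (`|mu| / sigma) c.
Proof.
move=> c1 s0; have c0 : 0 < c by apply: lt_trans c1.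
have cn : c != 0 by rewrite lt0r_neq0.
have sn : sigma != 0 by rewrite lt0r_neq0.
rewrite coverage_Phi// /P2; case: (leP 0 mu) => h.
  rewrite ger0_norm//.
  have -> : (- (mu / c) - mu) / sigma = - ((c + 1) / c * (mu / sigma)) by field; rewrite ?sn ?cn.
  have -> : (mu / c - mu) / sigma = - ((c - 1) / c * (mu / sigma)) by field; rewrite ?sn ?cn.
  rewrite !PhiN; ring.
rewrite ltr0_norm//.
have -> : (- (- mu / c) - mu) / sigma = (c - 1) / c * (- mu / sigma) by field; rewrite ?sn ?cn.
by have -> : (- mu / c - mu) / sigma = (c + 1) / c * (- mu / sigma) by field; rewrite ?sn ?cn.
Qed.


Lemma pdf_inv (k u : R) : 0 < k ->
  normal_pdf 0 k^-1 u = k * normal_peak 1 * expR (- (k * u) ^+ 2 / 2).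
Proof.
move=> k0; have kn : k != 0 by rewrite lt0r_neq0.
rewrite normal_pdfE ?invr_eq0// /normal_peak /normal_fun.
have -> : k^-1 ^+ 2 * pi *+ 2 = k^-1 ^+ 2 * (1 ^+ 2 * pi *+ 2) by ring.
have p0 : 0 < Num.sqrt (1 ^+ 2 * pi *+ 2 : R).
  by rewrite sqrtr_gt0 expr1n mul1r pmulrn_lgt0// pi_gt0.
rewrite sqrtrM ?sqr_ge0// sqrtr_sqr ger0_norm ?invr_ge0 ?ltW//.
have -> : - (u - 0) ^+ 2 / (k^-1 ^+ 2 *+ 2) = - (k * u) ^+ 2 / 2.
  by field; rewrite kn.
by field; rewrite kn lt0r_neq0.
Qed.

Lemma pdf_cmp (c u : R) : 1 < c -> 0 <= u ->
  (lamstar c <= u ->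
     normal_pdf 0 ((c + 1) / c)^-1 u <= normal_pdf 0 ((c - 1) / c)^-1 u) /\
  (u <= lamstar c ->
     normal_pdf 0 ((c - 1) / c)^-1 u <= normal_pdf 0 ((c + 1) / c)^-1 u).
Proof.
move=> c1 u0; have c0 : 0 < c by apply: lt_trans c1.
have cn : c != 0 by rewrite lt0r_neq0.
have c1n : c - 1 != 0 by rewrite lt0r_neq0// subr_gt0.
have a0 : 0 < (c - 1) / c by rewrite divr_gt0// subr_gt0.
have b0 : 0 < (c + 1) / c by rewrite divr_gt0// ltr_wpDr.
set q := (c + 1) / (c - 1).
have q1 : 1 <= q by rewrite /q ler_pdivlMr ?subr_gt0// mul1r; lra.
have q0 : 0 < q by apply: lt_le_trans q1.
have lq0 : 0 <= ln q by apply: ln_ge0.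
have L0 : 0 <= lamstar c by apply: sqrtr_ge0.
have L2 : lamstar c ^+ 2 = c / 2 * ln q by rewrite sqr_sqrtr// mulr_ge0// divr_ge0// ltW.
have eq1 : - ((c - 1) / c * u) ^+ 2 / 2 = - ((c + 1) / c * u) ^+ 2 / 2 + 2 * u ^+ 2 / c.
  by field; rewrite cn.
have aq : (c - 1) / c * q = (c + 1) / c by rewrite /q; field; rewrite cn c1n.
have p0 : 0 < normal_peak (1 : R) by apply: normal_peak_gt0; rewrite oner_eq0.
rewrite !pdf_inv// eq1 expRD.
set M := expR (- ((c + 1) / c * u) ^+ 2 / 2).
have M0 : 0 < M by apply: expR_gt0.
set E := expR (2 * u ^+ 2 / c).
have lnq : expR (ln q) = q by apply: lnK; rewrite posrE.
split=> h.
- have hE : q <= E.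
    rewrite /E -lnq ler_expR.
    have h2 : c / 2 * ln q <= u ^+ 2 by rewrite -L2; rewrite ler_pXn2r// ?nnegrE.
    rewrite ler_pdivlMr//; rewrite mulrC; lra.
  have h3 : (c + 1) / c <= (c - 1) / c * E by rewrite -aq ler_pM2l.
  have h4 : 0 <= normal_peak 1 * M * ((c - 1) / c * E - (c + 1) / c).
    by rewrite mulr_ge0 ?subr_ge0// mulr_ge0// ltW.
  have -> : (c - 1) / c * normal_peak 1 * (M * E) = (c + 1) / c * normal_peak 1 * M + normal_peak 1 * M * ((c - 1) / c * E - (c + 1) / c) by ring.
  by rewrite lerDl.
- have hE : E <= q.
    rewrite /E -lnq ler_expR.
    have h2 : u ^+ 2 <= c / 2 * ln q by rewrite -L2; rewrite ler_pXn2r// ?nnegrE.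
    rewrite ler_pdivrMr//; rewrite mulrC; lra.
  have h3 : (c - 1) / c * E <= (c + 1) / c by rewrite -aq ler_pM2l.
  have h4 : 0 <= normal_peak 1 * M * ((c + 1) / c - (c - 1) / c * E).
    by rewrite mulr_ge0 ?subr_ge0// mulr_ge0// ltW.
  have -> : (c + 1) / c * normal_peak 1 * M = (c - 1) / c * normal_peak 1 * (M * E) + normal_peak 1 * M * ((c + 1) / c - (c - 1) / c * E) by ring.
  by rewrite lerDl.
Qed.



Lemma np_le_itv (s1 s2 x y : R) :
  (forall u, x < u <= y -> normal_pdf 0 s1 u <= normal_pdf 0 s2 u) ->
  (normal_prob 0 s1 `]x, y] <= normal_prob 0 s2 `]x, y])%E.
Proof.
move=> H; rewrite /normal_prob; apply: ge0_le_integral => //.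
- by move=> u _; rewrite lee_fin normal_pdf_ge0.
- by apply/measurable_EFinP; apply: measurable_funTS; exact: measurable_normal_pdf.
- by apply/measurable_EFinP; apply: measurable_funTS; exact: measurable_normal_pdf.
Qed.

Lemma Fc_split (m s x y : R) : x <= y ->
  Fc m s y = Fc m s x + fine (normal_prob m s `]x, y]).
Proof.
by move=> xy; rewrite /Fc (@np_split R m s x y xy) fineD ?np_fini.
Qed.

Lemma P2_Fc (l c : R) : 1 < c ->
  P2 l c = Fc 0 ((c - 1) / c)^-1 l + 1 - Fc 0 ((c + 1) / c)^-1 l.
Proof.
move=> c1; have c0 : 0 < c by apply: lt_trans c1.
by rewrite /P2 !Phi_scale// divr_gt0// ?subr_gt0// ltr_wpDr.
Qed.

Lemma P2_min (c l : R) : 1 < c -> 0 <= l -> P2 (lamstar c) c <= P2 l c.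
Proof.
move=> c1 l0; rewrite !P2_Fc//.
have L0 : 0 <= lamstar c by apply: sqrtr_ge0.
case: (leP (lamstar c) l) => h.
  rewrite (@Fc_split 0 ((c - 1) / c)^-1 _ _ h) (@Fc_split 0 ((c + 1) / c)^-1 _ _ h).
  set A := fine _; set B := fine _.
  suff : B <= A by lra.
  apply: fine_le; rewrite ?np_fini//; apply: np_le_itv => u /andP[h1 h2].
  have u0 : 0 <= u by apply: le_trans L0 (ltW h1).
  exact: (proj1 (@pdf_cmp c u c1 u0)) (ltW h1).
rewrite (@Fc_split 0 ((c - 1) / c)^-1 _ _ (ltW h)) (@Fc_split 0 ((c + 1) / c)^-1 _ _ (ltW h)).
set A := fine _; set B := fine _.
suff : A <= B by lra.
apply: fine_le; rewrite ?np_fini//; apply: np_le_itv => u /andP[h1 h2].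
have u0 : 0 <= u by apply: le_trans l0 (ltW h1).
exact: (proj2 (@pdf_cmp c u c1 u0)) h2.
Qed.


End S2.

Section S3.
Variable R : realType.

Lemma peak1_le1 : normal_peak (1 : R) <= 1.
Proof.
have h : 1 <= (1 ^+ 2 * pi *+ 2 : R).
  rewrite expr1n mul1r -mulr_natr; have := pi_ge2 R; lra.
have s1 : 1 <= Num.sqrt (1 ^+ 2 * pi *+ 2 : R).
  rewrite -[leLHS]sqrtr1 ler_sqrt //; exact: le_trans ler01 h.
have sp : 0 < Num.sqrt (1 ^+ 2 * pi *+ 2 : R) by apply: lt_le_trans ltr01 s1.
by rewrite /normal_peak invf_le1.
Qed.

Lemma xexp_le1 (x : R) : 0 <= x -> x * expR (- x ^+ 2 / 2) <= 1.
Proof.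
move=> x0; rewrite mulNr expRN ler_pdivrMr ?expR_gt0// mul1r.
apply: le_trans (expR_ge1Dx _).
have : 0 <= (x - 1) ^+ 2 by apply: sqr_ge0.
nra.
Qed.

Lemma P2_lb (c l : R) : 1 < c -> 0 <= l -> 1 - 2 / (c - 1) <= P2 l c.
Proof.
move=> c1 l0; rewrite /P2; have c0 : 0 < c by apply: lt_trans c1.
have cn : c != 0 by rewrite lt0r_neq0.
have c1n : c - 1 != 0 by rewrite lt0r_neq0// subr_gt0.
have a0 : 0 < (c - 1) / c by rewrite divr_gt0// subr_gt0.
set a := (c - 1) / c in a0 *; set b := (c + 1) / c.
have al0 : 0 <= a * l by rewrite mulr_ge0// ltW.
have ab : a * l <= b * l by rewrite ler_wpM2r// ler_pM2r ?invr_gt0//; lra.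
have -> : Phi (b * l) = Phi (a * l) + fine (normal_prob 0 1 `]a * l, b * l])
  by exact: (@Fc_split R 0 1 _ _ ab).
set I := fine _.
set K := normal_peak (1 : R) * expR (- (a * l) ^+ 2 / 2).
have p0 : 0 < normal_peak (1 : R) by apply: normal_peak_gt0; rewrite oner_eq0.
have K0 : 0 <= K by rewrite mulr_ge0 ?expR_ge0// ltW.
have HI : (normal_prob 0 1 `](a * l)%R, (b * l)%R] <= (K * (b * l - a * l))%:E)%E.
  apply: (@le_trans _ _ (\int[lebesgue_measure]_(x in `](a * l)%R, (b * l)%R]) (cst K%:E) x))%E.
    rewrite /normal_prob; apply: ge0_le_integral => //.
    - by move=> u _; rewrite lee_fin normal_pdf_ge0.
    - by apply/measurable_EFinP; apply: measurable_funTS; exact: measurable_normal_pdf.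
    - move=> u; rewrite /= in_itv /= => /andP[h1 h2]; rewrite lee_fin.
      rewrite normal_pdfE ?oner_eq0// /K ler_pM2l// ler_expR /normal_fun subr0.
      have hu : (a * l) ^+ 2 <= u ^+ 2.
        rewrite ler_pXn2r// ?nnegrE//; [exact: ltW|exact: le_trans (ltW h1)].
      rewrite expr1n (_ : 1 *+ 2 = 2 :> R)//; lra.
  rewrite integral_cst//.
  have hm : (lebesgue_measure `](a * l)%R, (b * l)%R] <= (b * l - a * l)%:E)%E.
    rewrite lebesgue_measure_itv /=; case: ifPn => _ //.
    by rewrite lee_fin subr_ge0.
  have hK : (0 <= K%:E)%E by rewrite lee_fin.
  rewrite EFinM; exact: (lee_wpmul2l hK hm).
have HI' : I <= K * (b * l - a * l).
  by rewrite -lee_fin /I fineK ?np_fini.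
have e1 : b * l - a * l = 2 / (c - 1) * (a * l) by rewrite /a /b; field; rewrite cn c1n.
have hx := @xexp_le1 (a * l) al0.
have hp := peak1_le1.
have h2 : normal_peak 1 * (a * l * expR (- (a * l) ^+ 2 / 2)) <= 1.
  apply: mulr_ile1 => //; first exact: ltW.
  by rewrite mulr_ge0 // expR_ge0.
have h3 : K * (b * l - a * l) = 2 / (c - 1) * (normal_peak 1 * (a * l * expR (- (a * l) ^+ 2 / 2))).
  by rewrite e1 /K; ring.
have c2 : 0 <= 2 / (c - 1) by rewrite divr_ge0// subr_ge0 ltW.
have : K * (b * l - a * l) <= 2 / (c - 1).
  by rewrite h3 ler_piMr.
move=> hh; move: (le_trans HI' hh); clear; lra.
Qed.

End S3.

Theorem corollary2 (R : realType) :
  (forall c : R, 1 < c ->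
     (exists f : R -> R,
        (forall mu sigma : R, 0 < sigma -> coverage c mu sigma = f (mu / sigma))
        /\ (forall l : R, f (- l) = f l))
     /\ (forall mu sigma : R, 0 < sigma ->
           coverage c mu sigma = P2 (`|mu| / sigma) c)
     /\ (forall l : R, 0 <= l -> P2 (lamstar c) c <= P2 l c))
  /\
  (forall alpha : R, 0 < alpha < 1 / 2 ->
     exists c : R, 1 < c /\
       1 - alpha <= inf [set y : R | exists mu sigma : R,
                                        0 < sigma /\ y = coverage c mu sigma]).
Proof.
split.
  move=> c c1; split.
    exists (fun l => P2 `|l| c); split.
      move=> mu sigma s0; rewrite (@coverage_P2 R c mu sigma c1 s0).
      by rewrite normf_div (gtr0_norm s0).
    by move=> l; rewrite normrN.
  split; first by move=> mu sigma s0; exact: (@coverage_P2 R c mu sigma c1 s0).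
  by move=> l l0; exact: (@P2_min R c l c1 l0).
move=> alpha /andP[a0 a1].
have c1 : 1 < 1 + 2 / alpha by rewrite ltrDl divr_gt0.
exists (1 + 2 / alpha); split => //.
apply: lb_le_inf.
  by exists (coverage (1 + 2 / alpha) 0 1), 0, 1.
move=> y [mu [sigma [s0 ->]]].
have l0 : 0 <= `|mu| / sigma by rewrite divr_ge0// ltW.
rewrite (@coverage_P2 R _ mu sigma c1 s0).
have := @P2_lb R (1 + 2 / alpha) (`|mu| / sigma) c1 l0.
have -> : 2 / (1 + 2 / alpha - 1) = alpha.
  field; apply/andP; split; [exact: lt0r_neq0|apply/eqP => h; lra].
by [].
Qed.
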